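(* Let $\tilde A,\tilde B\in\mathbb{R}^{m\times n}$ and suppose there is $\gamma\in\mathbb{R}_{>0}$ with $\tilde C:=\tilde A+\gamma\tilde B=D+\hat{\mathbf{r}}\hat{\mathbf{c}}^\mathsf{T}$, where $D\in\mathcal{M}_{m\times n}(\mathbb{R})$, $\operatorname{rank}(D)<2$, $\operatorname{rank}(\tilde C)<3$, $\tilde C\notin\mathcal{M}_{m\times n}(\mathbb{R})$, $\hat{\mathbf{r}}\in\mathbb{R}^m$, $\hat{\mathbf{c}}\in\mathbb{R}^n$. Define $(\hat A,\hat B)$ as follows: (1) if $\operatorname{rank}(D)=0$: $\hat A=\tilde A$, $\hat B=\gamma\tilde B$; (2) if $\operatorname{rank}(D)=1$ and $\mathbf{1}_m\in\operatorname{span}(\tilde C)$: take any $\mathbf{x}_1$ with $\tilde C\mathbf{x}_1=\mathbf{1}_m$ and any $\mathbf{y}_1$ with $w_1=\mathbf{y}_1^\mathsf{T}\tilde C\mathbf{x}_1\ne0$, let $\hat{\mathbf{u}}^\mathsf{T}=w_1^{-1}\mathbf{y}_1^\mathsf{T}\tilde C$, and set $\hat A=\tilde A-\mathbf{1}_m\hat{\mathbf{u}}^\mathsf{T}$, $\hat B=\gamma\tilde B$; (3) if $\operatorname{rank}(D)=1$ and $\mathbf{1}_n\in\operatorname{span}(\tilde C^\mathsf{T})$: take any $\mathbf{y}_1$ with $\mathbf{y}_1^\mathsf{T}\tilde C=\mathbf{1}_n^\mathsf{T}$ and any $\mathbf{x}_1$ with $w_1=\mathbf{y}_1^\mathsf{T}\tilde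 C\mathbf{x}_1\ne0$, let $\hat{\mathbf{v}}=w_1^{-1}\tilde C\mathbf{x}_1$, and set $\hat A=\tilde A$, $\hat B=\gamma\tilde B-\hat{\mathbf{v}}\mathbf{1}_n^\mathsf{T}$. In each case the required vectors exist, $\operatorname{rank}(\hat A+\hat B)=1$, and $(m,n,\tilde A,\tilde B)$ is strategically equivalent to the rank-1 game $(m,n,\hat A,\hat B)$.
   Context: $\mathbf{1}_k$ is the all-ones vector of length $k$; $\operatorname{span}(C)$ is the column space of $C$. $\mathcal{M}_{m\times n}(\mathbb{R})=\{M\in\mathbb{R}^{m\times n}: M=\mathbf{1}_m\mathbf{u}^\mathsf{T}+\mathbf{v}\mathbf{1}_n^\mathsf{T}\text{ for some }\mathbf{u}\in\mathbb{R}^n,\mathbf{v}\in\mathbb{R}^m\}$. A bimatrix game $(m,n,A,B)$ has payoff matrices $A,B$; two games are strategically equivalent iff they have the same set of (mixed) Nash equilibria; a game is rank-1 if $\operatorname{rank}(A+B)=1$. *)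

(* Defs.v *)
From HB Require Import structures.
From mathcomp Require Import all_boot all_order all_algebra.
Set Implicit Arguments. Unset Strict Implicit. Unset Printing Implicit Defensive.
Import Order.TTheory GRing.Theory Num.Theory.
Local Open Scope ring_scope.

Definition ones (R : realFieldType) (k : nat) : 'cV[R]_k := const_mx 1.

Definition inM (R : realFieldType) (m n : nat) (M : 'M[R]_(m, n)) : Prop :=
  exists (u : 'cV[R]_n) (v : 'cV[R]_m), M = ones R m *m u^T + v *m (ones R n)^T.

Definition mixed (R : realFieldType) (k : nat) (p : 'cV[R]_k) : Prop :=
  (forall i, 0 <= p i 0) /\ \sum_i p i 0 = 1.

Definition payoff (R : realFieldType) (m n : nat) (x : 'cV[R]_m) (M : 'M[R]_(m, n))
  (y : 'cV[R]_n) : R := (x^T *m M *m y) 0 0.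

Definition nash (R : realFieldType) (m n : nat) (A B : 'M[R]_(m, n))
  (x : 'cV[R]_m) (y : 'cV[R]_n) : Prop :=
  [/\ mixed x, mixed y,
      (forall x' : 'cV[R]_m, mixed x' -> payoff x' A y <= payoff x A y) &
      (forall y' : 'cV[R]_n, mixed y' -> payoff x B y' <= payoff x B y)].

Definition strat_equiv (R : realFieldType) (m n : nat) (A B A' B' : 'M[R]_(m, n)) : Prop :=
  forall x y, nash A B x y <-> nash A' B' x y.

(* Main.v *)
Require Import Defs.
From HB Require Import structures.
From mathcomp Require Import all_boot all_order all_algebra.
From mathcomp Require Import zify ring lra.
Import Order.TTheory GRing.Theory Num.Theory.
Set Implicit Arguments. Unset Strict Implicit.
Local Open Scope ring_scope.

Definition affrel (R : realFieldType) (S T : Type) (Q : T -> Prop) (F F' : S -> T -> R) :=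
  forall s, exists a b, 0 < a /\ forall t, Q t -> F' s t = a * F s t + b.

Lemma affrel_inv (R : realFieldType) (S T : Type) (Q : T -> Prop) (F F' : S -> T -> R) :
  affrel Q F F' -> affrel Q F' F.
Proof.
move=> h s; have [a [b [a0 e]]] := h s.
exists a^-1, (- (b / a)); split; first by rewrite invr_gt0.
move=> t qt; rewrite e //; field; exact: lt0r_neq0.
Qed.

Lemma nash_tr (R : realFieldType) (m n : nat) (A B A' B' : 'M[R]_(m, n)) :
  affrel (@mixed R m) (fun y x => payoff x A y) (fun y x => payoff x A' y) ->
  affrel (@mixed R n) (fun x y => payoff x B y) (fun x y => payoff x B' y) ->
  forall x y, nash A B x y -> nash A' B' x y.
Proof.
move=> hA hB x y [mx my hx hy]; split => //.
  move=> x' mx'; have [a [b [a0 e]]] := hA y.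
  rewrite (e x') // (e x) // lerD2r ler_pM2l //; exact: hx.
move=> y' my'; have [a [b [a0 e]]] := hB x.
rewrite (e y') // (e y) // lerD2r ler_pM2l //; exact: hy.
Qed.

Lemma se_of (R : realFieldType) (m n : nat) (A B A' B' : 'M[R]_(m, n)) :
  affrel (@mixed R m) (fun y x => payoff x A y) (fun y x => payoff x A' y) ->
  affrel (@mixed R n) (fun x y => payoff x B y) (fun x y => payoff x B' y) ->
  strat_equiv A B A' B'.
Proof.
move=> hA hB x y; split; first exact: nash_tr.
by apply: nash_tr; apply: affrel_inv.
Qed.

Lemma affrel_id (R : realFieldType) (S T : Type) (Q : T -> Prop) (F : S -> T -> R) :
  affrel Q F F.
Proof. by move=> s; exists 1, 0; split => // t _; rewrite mul1r addr0. Qed.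

Lemma payoffZ (R : realFieldType) (m n : nat) (x : 'cV[R]_m) (B : 'M[R]_(m, n)) y g :
  payoff x (g *: B) y = g * payoff x B y.
Proof. by rewrite /payoff -scalemxAr -scalemxAl mxE. Qed.

Lemma affrelZ (R : realFieldType) (m n : nat) (B : 'M[R]_(m, n)) g : 0 < g ->
  affrel (@mixed R n) (fun x y => payoff x B y) (fun x y => payoff x (g *: B) y).
Proof. by move=> g0 s; exists g, 0; split => // t _; rewrite payoffZ addr0. Qed.

Lemma mixed_sumL (R : realFieldType) (k : nat) (x : 'cV[R]_k) :
  mixed x -> x^T *m ones R k = 1%:M.
Proof.
move=> [_ hs]; apply/matrixP => i j; rewrite !ord1 !mxE /=.
rewrite -hs; apply: eq_bigr => l _; by rewrite !mxE mulr1.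
Qed.

Lemma mixed_sumR (R : realFieldType) (k : nat) (x : 'cV[R]_k) :
  mixed x -> (ones R k)^T *m x = 1%:M.
Proof. by move=> mx; rewrite -[_ *m x]trmxK trmx_mul trmxK mixed_sumL // trmx1. Qed.

Lemma mxBE (R : realFieldType) (M N : 'M[R]_1) : (M - N) 0 0 = M 0 0 - N 0 0.
Proof. by rewrite !mxE. Qed.

Lemma affrel_shiftA (R : realFieldType) (m n : nat) (A : 'M[R]_(m, n)) (u : 'rV[R]_n) :
  affrel (@mixed R m) (fun y x => payoff x A y) (fun y x => payoff x (A - ones R m *m u) y).
Proof.
move=> y; exists 1, (- (u *m y) 0 0); split => // x mx.
rewrite mul1r /payoff mulmxBr mulmxBl mxBE mulmxA mixed_sumL // mul1mx.
by [].
Qed.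

Lemma affrel_shiftB (R : realFieldType) (m n : nat) (B : 'M[R]_(m, n)) (v : 'cV[R]_m) :
  affrel (@mixed R n) (fun x y => payoff x B y) (fun x y => payoff x (B - v *m (ones R n)^T) y).
Proof.
move=> x; exists 1, (- (x^T *m v) 0 0); split => // y my.
rewrite mul1r /payoff mulmxBr mulmxBl mxBE mulmxA -(mulmxA (x^T *m v)) mixed_sumR // mulmx1.
by [].
Qed.

Lemma rank_drop (R : realFieldType) (m n : nat) (C : 'M[R]_(m, n)) (P : 'M[R]_m) (x : 'cV[R]_n) :
  (P *m C) *m x = 0 -> C *m x != 0 -> (\rank (P *m C) < \rank C)%N.
Proof.
move=> h0 hn; apply: rank_ltmx; rewrite ltmxE submxMl /=.
apply/negP => /submxP [K hK]; move: hn; by rewrite hK -mulmxA h0 mulmx0 eqxx.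
Qed.

Lemma ones_neq0 (R : realFieldType) k : (0 < k)%N -> ones R k != 0.
Proof.
move=> k0; apply/eqP => /matrixP /(_ (Ordinal k0) 0); rewrite !mxE => /eqP.
by rewrite oner_eq0.
Qed.

Lemma ones_dot (R : realFieldType) k : ((ones R k)^T *m ones R k) 0 0 = k%:R.
Proof.
rewrite !mxE (eq_bigr (fun _ => 1)); last by move=> i _; rewrite !mxE mulr1.
by rewrite sumr_const card_ord.
Qed.

Lemma affrel_comp (R : realFieldType) (S T : Type) (Q : T -> Prop) (F G H : S -> T -> R) :
  affrel Q F G -> affrel Q G H -> affrel Q F H.
Proof.
move=> h1 h2 s; have [a1 [b1 [a10 e1]]] := h1 s; have [a2 [b2 [a20 e2]]] := h2 s.
exists (a2 * a1), (a2 * b1 + b2); split; first exact: mulr_gt0.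
by move=> t qt; rewrite e2 // e1 //; ring.
Qed.

Theorem mainTheorem12 (R : realFieldType) (m n : nat)
  (At Bt : 'M[R]_(m, n)) (gamma : R) (C D : 'M[R]_(m, n))
  (rh : 'cV[R]_m) (ch : 'cV[R]_n)
  (hgamma : 0 < gamma)
  (hC : C = At + gamma *: Bt)
  (hCD : C = D + rh *m ch^T)
  (hDM : inM D) (hDr : (\rank D < 2)%N) (hCr : (\rank C < 3)%N)
  (hCM : ~ inM C) :
  (* case (1) *)
  ((\rank D = 0)%N ->
     \rank (At + gamma *: Bt)%R = 1%N /\ strat_equiv At Bt At (gamma *: Bt))
  /\
  (* case (2): 1_m in the column space of C *)
  ((\rank D = 1)%N -> ((ones R m)^T <= C^T)%MS ->
     (exists x1 : 'cV[R]_n, C *m x1 = ones R m) /\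
     (forall x1 : 'cV[R]_n, C *m x1 = ones R m ->
        exists y1 : 'cV[R]_m, (y1^T *m C *m x1) 0 0 != 0) /\
     (forall (x1 : 'cV[R]_n) (y1 : 'cV[R]_m), C *m x1 = ones R m ->
        let w1 := (y1^T *m C *m x1) 0 0 in w1 != 0 ->
        let uh : 'rV[R]_n := w1^-1 *: (y1^T *m C) in
        let Ah := At - ones R m *m uh in
        let Bh := gamma *: Bt in
        \rank (Ah + Bh)%R = 1%N /\ strat_equiv At Bt Ah Bh))
  /\
  (* case (3): 1_n in the column space of C^T *)
  ((\rank D = 1)%N -> ((ones R n)^T <= C)%MS ->
     (exists y1 : 'cV[R]_m, y1^T *m C = (ones R n)^T) /\
     (forall y1 : 'cV[R]_m, y1^T *m C = (ones R n)^T ->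
        exists x1 : 'cV[R]_n, (y1^T *m C *m x1) 0 0 != 0) /\
     (forall (x1 : 'cV[R]_n) (y1 : 'cV[R]_m), y1^T *m C = (ones R n)^T ->
        let w1 := (y1^T *m C *m x1) 0 0 in w1 != 0 ->
        let vh : 'cV[R]_m := w1^-1 *: (C *m x1) in
        let Ah := At in
        let Bh := gamma *: Bt - vh *m (ones R n)^T in
        \rank (Ah + Bh)%R = 1%N /\ strat_equiv At Bt Ah Bh)).
Proof.
have m0 : (0 < m)%N.
  rewrite lt0n; apply/negP => /eqP m0; apply: hCM; exists 0, 0; apply/matrixP => i j.
  have : (i < 0)%N by rewrite -{1}m0 ltn_ord.
  by rewrite ltn0.
have n0 : (0 < n)%N.
  rewrite lt0n; apply/negP => /eqP n0; apply: hCM; exists 0, 0; apply/matrixP => i j.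
  have : (j < 0)%N by rewrite -{1}n0 ltn_ord.
  by rewrite ltn0.
have rank_one : forall C' : 'M[R]_(m, n), (\rank C' < \rank C)%N -> C' != 0 -> \rank C' = 1%N.
  move=> C' lt nz; have : \rank C' != 0%N by rewrite mxrank_eq0.
  lia.
split; [|split].
- move=> /eqP; rewrite mxrank_eq0 => /eqP D0; split; last first.
    by apply: se_of; [exact: affrel_id | exact: affrelZ].
  rewrite -hC.
  have le1 : (\rank C <= 1)%N.
    by rewrite hCD D0 add0r; apply: leq_trans (mxrankM_maxl _ _) (rank_leq_col _).
  have : \rank C != 0%N.
    rewrite mxrank_eq0; apply/eqP => C0; apply: hCM; exists 0, 0.
    by rewrite C0 trmx0 mulmx0 mul0mx addr0.
  lia.
- move=> _ hs; have [K hK] := submxP hs.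
  have ex : C *m K^T = ones R m by rewrite -[ones R m]trmxK hK trmx_mul trmxK.
  split; first by exists K^T.
  split.
    move=> x1 hx1; exists (ones R m); rewrite -mulmxA hx1 ones_dot pnatr_eq0 -lt0n; exact: m0.
  move=> x1 y1 hx1 w1 hw uh Ah Bh.
  split; last by apply: se_of; [exact: affrel_shiftA | exact: affrelZ].
  have -> : Ah + Bh = (1%:M - ones R m *m (w1^-1 *: y1^T)) *m C.
    by rewrite /Ah /Bh /uh hC mulmxBl mul1mx -mulmxA -scalemxAl addrAC.
  have hw1 : y1^T *m ones R m = w1%:M by rewrite /w1 -mulmxA hx1 -mx11_scalar.
  eapply rank_one.
    apply: (rank_drop (x := x1)); last by rewrite hx1; exact: ones_neq0.
    rewrite -mulmxA hx1 mulmxBl mul1mx -mulmxA -scalemxAl hw1 scale_scalar_mx mulVf //.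
    by rewrite mulmx1 subrr.
  apply/eqP => h0; apply: hCM; exists (w1^-1 *: y1^T *m C)^T, 0.
  rewrite trmxK mul0mx addr0 mulmxA; apply/eqP; rewrite -subr_eq0; apply/eqP.
  by rewrite -h0 mulmxBl mul1mx.
- move=> _ hs; have [K hK] := submxP hs.
  split; first by exists K^T; rewrite trmxK.
  split.
    move=> y1 hy1; exists (ones R n); rewrite hy1 ones_dot pnatr_eq0 -lt0n; exact: n0.
  move=> x1 y1 hy1 w1 hw vh Ah Bh.
  split.
    have -> : Ah + Bh = C *m (1%:M - (w1^-1 *: x1) *m (ones R n)^T).
      by rewrite /Ah /Bh /vh hC mulmxBr mulmx1 mulmxA scalemxAr addrA.
    have hw1 : (ones R n)^T *m x1 = w1%:M by rewrite /w1 hy1 -mx11_scalar.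
    apply: rank_one.
      rewrite -mxrank_tr trmx_mul -(mxrank_tr C); apply: (rank_drop (x := y1)).
        apply/trmx_inj; rewrite !trmx_mul !trmxK trmx0 mulmxA hy1.
        rewrite mulmxBr mulmx1 mulmxA -scalemxAr hw1 scale_scalar_mx mulVf //.
        by rewrite mul1mx subrr.
      rewrite -[C^T *m y1]trmxK trmx_mul trmxK hy1 trmxK; exact: ones_neq0.
    apply/eqP => h1; apply: hCM; exists 0, (C *m (w1^-1 *: x1)).
    rewrite trmx0 mulmx0 add0r -mulmxA; apply/eqP; rewrite -subr_eq0; apply/eqP.
    by rewrite -h1 mulmxBr mulmx1.
  apply: se_of; first exact: affrel_id.
  apply: affrel_comp; [exact: (affrelZ Bt hgamma) | exact: affrel_shiftB].
Qed.
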